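(* For $k\geq 3$ and $r\geq 2$, $$\Delta^{M(k;r)}(k;r)\leq \Delta^{M(k-1;r)}(k-1;r)+M(k;r-1)-1.$$
   Context: A sequence of positive integers $w_1<\dots<w_n$ is an ascending wave if $w_{i+1}-w_i \geq w_i-w_{i-1}$ for $2\le i\le n-1$. $AW(k;r)$ is the least $N$ such that every $r$-coloring of $\{1,\dots,N\}$ contains a $k$-term monochromatic ascending wave. For $k\ge 2$ and $M\ge AW(k;r)$: for an $r$-coloring $\psi$ of $\{1,\dots,M\}$, $\delta_k(\psi)$ is the minimum of $w_k-w_{k-1}$ over all monochromatic $k$-term ascending waves $(w_1,\dots,w_k)$ under $\psi$, and $\Delta^M(k;r)$ is the maximum of $\delta_k(\psi)$ over all $r$-colorings $\psi$ of $\{1,\dots,M\}$. The integers $M(k;r)$ are defined by $M(k;1)=k$, $M(1;r)=1$, $M(2;r)=r+1$, and for $k\ge3$, $r\ge2$, $M(k;r)=M(k-1;r)+\Delta^{M(k-1;r)}(k-1;r)+M(k;r-1)-1$; one has $M(k;r)\ge AW(k;r)$ so these quantities are defined. *)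

(* Defs.v *)
From mathcomp Require Import all_boot.
Set Implicit Arguments. Unset Strict Implicit. Unset Printing Implicit Defensive.

Definition asc_wave (w : seq nat) : bool :=
  [&& all (fun x => 0 < x) w, sorted ltn w &
      all (fun i => nth 0 w i - nth 0 w i.-1 <= nth 0 w i.+1 - nth 0 w i)
          (iota 1 (size w - 2))].

(* An r-coloring of {1,...,N} is psi : {ffun 'I_N -> 'I_r}; the integer
   x in {1..N} is represented by the ordinal x-1, i.e. ordinal i stands for i+1. *)
Definition coloring (N r : nat) := {ffun 'I_N -> 'I_r}.

Definition wave_vals N k (t : k.-tuple 'I_N) : seq nat :=
  [seq (val x).+1 | x <- t].

Definition mono_wave N r k (psi : coloring N r) (t : k.-tuple 'I_N) : bool :=
  asc_wave (wave_vals t) && constant [seq psi x | x <- t].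

Definition last_gap N k (t : k.-tuple 'I_N) : nat :=
  nth 0 (wave_vals t) k.-1 - nth 0 (wave_vals t) k.-2.

Definition has_mono_wave N r k : Prop :=
  forall psi : coloring N r, exists t : k.-tuple 'I_N, mono_wave psi t.

(* delta_k(psi): minimum of w_k - w_{k-1} over all monochromatic k-term
   ascending waves (the default value N is only reached when there is no
   such wave, which does not happen for N >= AW(k;r)). *)
Definition delta (N r k : nat) (psi : coloring N r) : nat :=
  \big[minn/N]_(t : k.-tuple 'I_N | mono_wave psi t) last_gap t.
Arguments delta : clear implicits.

Definition Delta N k r : nat := \max_(psi : coloring N r) delta N r k psi.

(* M(k;r): M(k;1) = k, M(1;r) = 1, M(2;r) = r+1, and for k >= 3, r >= 2,
   M(k;r) = M(k-1;r) + Delta^{M(k-1;r)}(k-1;r) + M(k;r-1) - 1.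
   (Values at k = 0 or r = 0 are junk and never used.) *)
Fixpoint Mkr (k r : nat) {struct k} : nat :=
  match k with
  | 0 => 0
  | 1 => 1
  | 2 => r.+1
  | k'.+1 =>
      (fix g (r : nat) : nat :=
         match r with
         | 0 => 0
         | 1 => k
         | r'.+1 => Mkr k' r + Delta (Mkr k' r) k' r + g r' - 1
         end) r
  end.

(* Main.v *)
Require Import Defs.
From mathcomp Require Import all_boot zify.
Set Implicit Arguments. Unset Strict Implicit.

Lemma asc_shift a s : asc_wave s -> asc_wave (map (addn a) s).
Proof.
move=> /and3P [Hp Hs Hw]; apply/and3P; split.
- rewrite all_map; apply: sub_all Hp => x /= Hx; lia.
- by rewrite sorted_map; apply: sub_sorted Hs => x y /=; rewrite ltn_add2l.
- rewrite size_map; apply/allP => i Hi; have := allP Hw i Hi.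
  move: Hi; rewrite mem_iota => /andP [H1 H2].
  rewrite !(nth_map 0) ?subnDl //; lia.
Qed.

Lemma asc_rcons s z : 2 <= size s -> asc_wave s -> last 0 s < z ->
  nth 0 s (size s).-1 - nth 0 s (size s).-2 <= z - nth 0 s (size s).-1 ->
  asc_wave (rcons s z).
Proof.
move=> Hsz /and3P [Hp Hs Hw] Hl Hg; apply/and3P; split.
- rewrite all_rcons Hp andbT; lia.
- case: s Hsz Hp Hs Hw Hl Hg => [//|x s'] _ _ Hs _ Hl _.
  by rewrite /= rcons_path; apply/andP; split.
- rewrite size_rcons.
  have -> : (size s).+1 - 2 = (size s - 2) + 1 by lia.
  rewrite iotaD all_cat; apply/andP; split.
  + apply/allP => i Hi; have := allP Hw i Hi.
    move: Hi; rewrite mem_iota => /andP [H1 H2].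
    rewrite !nth_rcons.
    have -> : i < size s by lia.
    have -> : i.-1 < size s by lia.
    have -> : i.+1 < size s by lia.
    by [].
  + rewrite /= andbT.
    have E1 : (1 + (size s - 2)) = (size s).-1 by lia.
    rewrite E1 !nth_rcons.
    have Hs1 : (size s).-1 < size s by lia.
    have Hs2 : (size s).-2 < size s by lia.
    have Hs3 : (size s).-1.+1 < size s = false by lia.
    have Hs4 : (size s).-1.+1 == size s by lia.
    have E2 : 0 + (size s - 2) = (size s).-2 by lia.
    rewrite Hs1 E2 Hs2 Hs3 Hs4 //.
Qed.

Lemma nth_le N s i : all (fun x => x <= N) s -> nth 0 s i <= N.
Proof.
move=> H; case: (ltnP i (size s)) => Hi.
- exact: (allP H _ (mem_nth 0 Hi)).
- by rewrite nth_default.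
Qed.

Lemma nth_pos s i : all (fun x => 0 < x) s -> i < size s -> 0 < nth 0 s i.
Proof. by move=> H Hi; exact: (allP H _ (mem_nth 0 Hi)). Qed.

Lemma size_vals N k (t : k.-tuple 'I_N) : size (wave_vals t) = k.
Proof. by rewrite size_map size_tuple. Qed.

Lemma vals_range N k (t : k.-tuple 'I_N) : all (fun x => 0 < x <= N) (wave_vals t).
Proof. by apply/allP => x /mapP [y _ ->] /=; rewrite ltn_ord. Qed.

Lemma vals_le N k (t : k.-tuple 'I_N) : all (fun x => x <= N) (wave_vals t).
Proof. by apply/allP => x /mapP [y _ ->] /=; rewrite ltn_ord. Qed.

Lemma vals_pos N k (t : k.-tuple 'I_N) : all (fun x => 0 < x) (wave_vals t).
Proof. by apply/allP => x /mapP [y _ ->]. Qed.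

Lemma mk_tuple N k s : size s = k -> all (fun x => 0 < x <= N) s ->
  exists t : k.-tuple 'I_N, wave_vals t = s.
Proof.
move=> Hk; subst k; elim: s => [|x s IH] /=.
- by move=> _; exists [tuple].
- move=> /andP [/andP [H0 H1] Ha]; have [t Ht] := IH Ha.
  have Hx : x.-1 < N by lia.
  exists [tuple of Ordinal Hx :: t].
  move: Ht; rewrite /wave_vals /= => ->; congr (_ :: _); lia.
Qed.

Lemma mono_intro N r k (psi : coloring N r) (t : k.-tuple 'I_N) c :
  asc_wave (wave_vals t) -> (forall x, x \in t -> psi x = c) -> mono_wave psi t.
Proof.
move=> Ha Hc; rewrite /mono_wave Ha /=.
apply: (@all_pred1_constant _ c); rewrite all_map; apply/allP => x Hx /=.
by rewrite Hc.
Qed.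

Lemma mono_color N r k (psi : coloring N r) (t : k.-tuple 'I_N) (c0 : 'I_r) :
  mono_wave psi t -> exists c, forall x, x \in t -> psi x = c.
Proof.
move=> /andP [_ Hc0]; case/(constantP c0): Hc0 => c Hc; exists c; move=> x Hx.
have : psi x \in [seq psi y | y <- t] by apply: map_f.
by rewrite Hc => /nseqP [-> _].
Qed.

Lemma mem_vals N k (t : k.-tuple 'I_N) x : x \in t -> (val x).+1 \in wave_vals t.
Proof. by move=> Hx; apply: (map_f (fun y : 'I_N => (val y).+1)). Qed.

Lemma bigmin_wit (I : eqType) (s : seq I) (P : pred I) (F : I -> nat) idx :
  \big[minn/idx]_(i <- s | P i) F i = idx \/
  exists i, P i /\ F i <= \big[minn/idx]_(i <- s | P i) F i.
Proof.
elim: s => [|x s IH]; first by rewrite big_nil; left.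
rewrite big_cons; case: ifP => Px //.
set b := \big[minn/idx]_(i <- s | P i) F i in IH *.
case: (leqP (F x) b) => h.
- by right; exists x; split => //; rewrite leq_min leqnn h.
- exact: IH.
Qed.

Lemma bigmin_le (I : eqType) (s : seq I) (P : pred I) (F : I -> nat) idx x :
  x \in s -> P x -> \big[minn/idx]_(i <- s | P i) F i <= F x.
Proof.
elim: s => [//|y s IH]; rewrite in_cons big_cons => /orP [/eqP <-|Hx] Px.
- by rewrite Px geq_minl.
- case: ifP => _; last exact: IH.
  by rewrite geq_min IH ?orbT.
Qed.

Lemma asc_two a b : 0 < a -> a < b -> asc_wave [:: a; b].
Proof.
move=> Ha Hb; apply/and3P; split => //=.
- rewrite Ha /=; lia.
- by rewrite Hb.
Qed.

Lemma asc_iota n : asc_wave (iota 1 n).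
Proof.
apply/and3P; split.
- by apply/allP => x; rewrite mem_iota; lia.
- exact: iota_ltn_sorted.
- apply/allP => i; rewrite size_iota mem_iota => Hi.
  rewrite !nth_iota; lia.
Qed.

Definition bnd k r := Delta (Mkr k.-1 r) k.-1 r + Mkr k r.-1 - 1.

Lemma main k : forall r, 0 < k -> 0 < r -> forall psi : coloring (Mkr k r) r,
  exists t : k.-tuple 'I_(Mkr k r), mono_wave psi t /\
    (2 < k -> 1 < r -> last_gap t <= bnd k r).
Proof.
elim: k => [//|k IHk] r _ Hrr psi.
case: k IHk psi => [|[|k']] IHk psi.
- have [t Ht] := @mk_tuple (Mkr 1 r) 1 [:: 1] erefl erefl.
  exists t; split => //.
  apply: (mono_intro (c := psi ord0)); first by rewrite Ht.
  move=> x _; congr (psi _); apply: val_inj; case: x => [[|m] Hm] //.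
- case: (boolP [exists x : 'I_(Mkr 2 r), exists y : 'I_(Mkr 2 r),
                 (x < y) && (psi x == psi y)]).
  + case/existsP => x /existsP [y /andP [Hxy /eqP Hc]].
    have Hall : all (fun z => 0 < z <= Mkr 2 r) [:: (val x).+1; (val y).+1].
      by rewrite /= !ltn_ord.
    have [t Ht] := @mk_tuple (Mkr 2 r) 2 [:: (val x).+1; (val y).+1] erefl Hall.
    exists t; split => //.
    apply: (mono_intro (c := psi x)); first by rewrite Ht; apply: asc_two.
    move=> z /mem_vals; rewrite Ht !inE => /orP [] /eqP [] /val_inj -> //.
  + move=> Hn; exfalso.
    have Hinj : injective psi.
      move=> x y E; case: (ltngtP x y) => h.
      * case/negP: Hn; apply/existsP; exists x; apply/existsP; exists y.
        by rewrite h E eqxx.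
      * case/negP: Hn; apply/existsP; exists y; apply/existsP; exists x.
        by rewrite h E eqxx.
      * exact: val_inj.
    have := leq_card _ Hinj; rewrite !card_ord.
    have -> : Mkr 2 r = r.+1 by []. lia.
- move: psi; elim: r Hrr => [//|[|r'] IHr] Hrr psi.
  + have E1 : Mkr k'.+3 1 = k'.+3 by [].
    have Hall : all (fun x => 0 < x <= Mkr k'.+3 1) (iota 1 k'.+3).
      by apply/allP => x; rewrite mem_iota E1; lia.
    have [t Ht] := @mk_tuple (Mkr k'.+3 1) k'.+3 (iota 1 k'.+3) (size_iota _ _) Hall.
    exists t; split; last by [].
    apply: (mono_intro (c := ord0)); first by rewrite Ht; apply: asc_iota.
    move=> x _; exact: ord1.
  + have HM : Mkr k'.+3 r'.+2 = Mkr k'.+2 r'.+2 + Delta (Mkr k'.+2 r'.+2) k'.+2 r'.+2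
                + Mkr k'.+3 r'.+1 - 1 by [].
    have Hbnd : bnd k'.+3 r'.+2 = Delta (Mkr k'.+2 r'.+2) k'.+2 r'.+2
                + Mkr k'.+3 r'.+1 - 1 by [].
    have IHk2 := IHk r'.+2 erefl erefl.
    have IHr2 := IHr erefl.
    clear IHk IHr.
    move: psi HM Hbnd IHr2 IHk2.
    move: (Mkr k'.+3 r'.+2) (bnd k'.+3 r'.+2) (Mkr k'.+3 r'.+1) (Mkr k'.+2 r'.+2)
      => M B m P psi HM Hbnd IHr IHk.
    have Hm : 0 < m.
      have [t1 _] := IHr [ffun _ => ord0].
      case: t1 => [[|x s] Hs] //.
      exact: (leq_ltn_trans (leq0n _) (ltn_ord x)).
    have HP : P <= M by lia.
    pose psi' : coloring P r'.+2 := [ffun i => psi (widen_ord HP i)].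
    have [t0 [Hmono0 Hgap0]] : exists t0 : k'.+2.-tuple 'I_P,
        mono_wave psi' t0 /\ last_gap t0 <= Delta P k'.+2 r'.+2.
      have Hdl : delta P r'.+2 k'.+2 psi' <= Delta P k'.+2 r'.+2.
        rewrite /Delta; exact: (leq_bigmax psi').
      have W := bigmin_wit (index_enum _) (mono_wave psi') (@last_gap P k'.+2) P.
      case: W => [Heq|[t0 [H1 H2]]].
      * have [t0 [H1 _]] := IHk psi'.
        exists t0; split => //; apply: leq_trans Hdl.
        rewrite /delta Heq /last_gap; apply: leq_trans (leq_subr _ _) _.
        exact: nth_le (vals_le t0).
      * by exists t0; split => //; apply: leq_trans H2 Hdl.
    have [c Hc] := mono_color ord0 Hmono0.
    have /andP [Hasc0 _] := Hmono0.
    have Hs0 : size (wave_vals t0) = k'.+2 := size_vals t0.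
    have Hsort0 : sorted ltn (wave_vals t0) by case/and3P: Hasc0.
    have Hvw : nth 0 (wave_vals t0) k' < nth 0 (wave_vals t0) k'.+1.
      by apply: (sorted_ltn_nth ltn_trans 0 Hsort0); rewrite ?inE ?Hs0.
    have Hv0 : 0 < nth 0 (wave_vals t0) k'.
      by apply: nth_pos (vals_pos t0) _; rewrite Hs0.
    have HwP : nth 0 (wave_vals t0) k'.+1 <= P := nth_le _ (vals_le t0).
    have Hg : last_gap t0 = nth 0 (wave_vals t0) k'.+1 - nth 0 (wave_vals t0) k' by [].
    rewrite Hg in Hgap0.
    have Hblk : forall j : 'I_m, nth 0 (wave_vals t0) k'.+1
        + (nth 0 (wave_vals t0) k'.+1 - nth 0 (wave_vals t0) k') - 1 + j < M.
      by move=> j; have := ltn_ord j; lia.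
    pose blk (j : 'I_m) : 'I_M := Ordinal (Hblk j).
    case: (boolP [exists j : 'I_m, psi (blk j) == c]).
    * case/existsP => j /eqP Hj.
      pose z := nth 0 (wave_vals t0) k'.+1
        + (nth 0 (wave_vals t0) k'.+1 - nth 0 (wave_vals t0) k') + j.
      have Hs : size (rcons (wave_vals t0) z) = k'.+3 by rewrite size_rcons Hs0.
      have Hrg : all (fun x => 0 < x <= M) (rcons (wave_vals t0) z).
        rewrite all_rcons; apply/andP; split; first by have := ltn_ord j; rewrite /z; lia.
        by apply/allP => x Hx; have := allP (vals_range t0) x Hx; lia.
      have [t Ht] := mk_tuple Hs Hrg.
      exists t; split.
      - apply: (mono_intro (c := c)).
        + rewrite Ht; apply: asc_rcons; rewrite ?Hs0 //.
          rewrite -(nth_last 0) Hs0 /= /z; lia.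
          rewrite /= /z; lia.
        + move=> x /mem_vals; rewrite Ht mem_rcons inE => /orP [/eqP E | Hx].
          have -> : x = blk j by apply: val_inj; move: E; rewrite /= /z; lia.
          exact Hj.
          case/mapP: Hx => y Hy [] E.
          have -> : x = widen_ord HP y by apply: val_inj.
          by rewrite -(Hc y Hy) /psi' ffunE.
      - move=> _ _; rewrite /last_gap Ht /= !nth_rcons Hs0 ltnn eqxx ltnSn Hbnd /z.
        have := ltn_ord j; lia.
    * move=> Hn.
      have Hne : forall j, psi (blk j) != c.
        move=> j; apply/negP => E; case/negP: Hn; apply/existsP; exists j; exact E.
      pose col : coloring m r'.+1 := [ffun j => odflt ord0 (unlift c (psi (blk j)))].
      have [t1 [Hmono1 _]] := IHr col.
      have [c1 Hc1] := mono_color ord0 Hmono1.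
      pose a := nth 0 (wave_vals t0) k'.+1
        + (nth 0 (wave_vals t0) k'.+1 - nth 0 (wave_vals t0) k') - 1.
      have Hs : size (map (addn a) (wave_vals t1)) = k'.+3 by rewrite size_map size_vals.
      have Hrg : all (fun x => 0 < x <= M) (map (addn a) (wave_vals t1)).
        rewrite all_map; apply/allP => x Hx; have := allP (vals_range t1) x Hx.
        rewrite /= /a; lia.
      have [t Ht] := mk_tuple Hs Hrg.
      exists t; split.
      - apply: (mono_intro (c := lift c c1)).
        + rewrite Ht; apply: asc_shift; by case/andP: Hmono1.
        + move=> x /mem_vals; rewrite Ht => /mapP [y /mapP [j Hj ->] E].
          have -> : x = blk j by apply: val_inj; move: E; rewrite /= /a; lia.
          have := Hc1 j Hj; rewrite /col ffunE.
          case: unliftP => [u Eu | Eu] /= Hu.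
          by rewrite Eu Hu.
          by move: (Hne j); rewrite Eu eqxx.
      - move=> _ _; rewrite /last_gap Ht /= !(nth_map 0) ?size_vals // subnDl Hbnd.
        have := nth_le k'.+2 (vals_le t1).
        have := @nth_pos (wave_vals t1) k'.+1 (vals_pos t1).
        rewrite size_vals; lia.
Qed.

Theorem corollary1p2 (k r : nat) : 3 <= k -> 2 <= r ->
  Delta (Mkr k r) k r <= Delta (Mkr k.-1 r) k.-1 r + Mkr k r.-1 - 1.
Proof.
move=> Hk Hr; apply/bigmax_leqP => psi _.
have [t [Hm Hg]] := @main k r (ltnW (ltnW Hk)) (ltnW Hr) psi.
apply: leq_trans (Hg Hk Hr); rewrite /delta.
by apply: bigmin_le => //; exact: mem_index_enum.
Qed.
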